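(* Let $r_1,\dots,r_n$ be establishment records with nonnegative confidential attributes $A_1,\dots,A_m$, let $\psi$ be a neighbor function with distance parameters $\sigma_1,\dots,\sigma_m>0$, and let $\mu_1,\dots,\mu_m>0$. For $j=1,\dots,n$ and $i=1,\dots,m$ define the noisy values $o_{j,i}=\psi(r_j[A_i])+Z_{j,i}$ where the $Z_{j,i}\sim N(0,\sigma_i^2/\mu_i^2)$ are independent. Let $\beta\in(0,1)$, define $\tau=\Phi^{-1}\big((1-\beta)^{1/(mn)}\big)$, and define $u_{j,i}=\psi^{-1}\big(o_{j,i}+\sigma_i\tau/\mu_i\big)$. Then with probability $1-\beta$ the inequalities $r_j[A_i]\leq u_{j,i}$ hold simultaneously for all $j$ and $i$.
   Context: $\Phi$ denotes the standard normal CDF. A neighbor function is a function $\psi:\mathbb{R}_{\geq 0}\to\mathbb{R}$ that is strictly increasing, continuous, concave, and such that $x\mapsto\psi(e^{x})$ is convex; $\psi^{-1}$ denotes its inverse. $r_j[A_i]\geq 0$ denotes the value of confidential attribute $A_i$ in record $r_j$. *)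

(* Defs.v *)
From HB Require Import structures.
From mathcomp Require Import all_boot all_order all_algebra.
From mathcomp Require Import all_classical all_reals all_analysis.
Set Implicit Arguments. Unset Strict Implicit. Unset Printing Implicit Defensive.
Import Order.TTheory GRing.Theory Num.Theory.
Import numFieldNormedType.Exports.
Local Open Scope classical_set_scope.
Local Open Scope ring_scope.

Definition Phi {R : realType} (x : R) : R :=
  fine (normal_prob 0 1 `]-oo, x]).

(* Neighbor function psi : R_{>=0} -> R (values of psi on negative reals are
   irrelevant): strictly increasing, continuous, concave on [0,+oo), and
   x |-> psi (e^x) convex on R. *)
Definition neighbor_function {R : realType} (psi : R -> R) : Prop :=
  [/\ (forall x y, 0 <= x -> x < y -> psi x < psi y),
      {within `[0, +oo[, continuous psi},
      (forall x y (t : R), 0 <= x -> 0 <= y -> 0 <= t <= 1 ->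
          t * psi x + (1 - t) * psi y <= psi (t * x + (1 - t) * y)) &
      (forall x y (t : R), 0 <= t <= 1 ->
          psi (expR (t * x + (1 - t) * y)) <= t * psi (expR x) + (1 - t) * psi (expR y))].

(* On the range of psi this is the
   ordinary inverse psi^{-1}(y); below the range it is -oo, above it +oo. *)
Definition psi_inv {R : realType} (psi : R -> R) (y : R) : \bar R :=
  ereal_sup [set x%:E | x in [set x : R | 0 <= x /\ psi x <= y]].

(* Mutual independence of a finite family of real random variables:
   product rule for every choice of Borel sets (taking B k = setT for the
   indices outside a subfamily gives the product rule for every subfamily). *)
Definition mutually_independent {R : realType} {d} {T : measurableType d}
    (P : probability T R) (I : finType) (X : I -> T -> R) : Prop :=
  forall B : I -> set R, (forall k, measurable (B k)) ->
    P (\bigcap_(k in [set: I]) (X k @^-1` B k)) =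
    (\prod_(k : I) fine (P (X k @^-1` B k)))%:E.

(* Main.v *)
Require Import Defs.
From HB Require Import structures.
From mathcomp Require Import all_boot all_order all_algebra.
From mathcomp Require Import all_classical all_reals all_analysis.
From mathcomp Require Import lra ring.
Import Order.TTheory GRing.Theory Num.Theory.
Import numFieldNormedType.Exports.
Local Open Scope classical_set_scope.
Local Open Scope ring_scope.

Lemma psi_inv_key {R : realType} (psi : R -> R) (r y : R) :
  neighbor_function psi -> 0 <= r ->
  ((r%:E <= psi_inv psi y)%E <-> psi r <= y).
Proof.
move=> [inc cont _ _] r0; split; last first.
  move=> h; apply: ereal_sup_ubound => /=; exists r => //.
move=> H; rewrite leNgt; apply/negP => yr.
have Ar : `[0, +oo[%classic r by rewrite /= in_itv /= r0.
have cr : psi @ within `[0, +oo[%classic (nbhs r) --> psi r.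
  by rewrite nbhs_subspace_in //; exact: cont.
have := cvgr_gt _ cr _ yr.
move=> /(_ (within_filter _ _)); rewrite /within /= => Hn.
have [e /= e0 He] := (nbhs_ballP _ _).1 Hn.
have : (psi_inv psi y <= (r - e)%:E)%E.
  apply: ub_ereal_sup => _ [x [x0 xy] <-]; rewrite lee_fin.
  have xr : x < r.
    rewrite ltNge; apply/negP; rewrite le_eqVlt => /orP [/eqP rx|rx].
      by move: yr; rewrite rx ltNge xy.
    by move: (inc _ _ r0 rx) => /(lt_le_trans) /(_ (le_trans xy (ltW yr))); rewrite ltxx.
  rewrite leNgt; apply/negP => rex.
  have : ball r e x.
    rewrite /ball /= ger0_norm ?subr_ge0 ?(ltW xr) //.
    by rewrite ltrBlDr addrC -ltrBlDr.
  move=> /He /(_ _); rewrite /= in_itv /= x0 => /(_ isT).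
  by rewrite ltNge xy.
move=> /(le_trans H); rewrite lee_fin => h.
lra.
Qed.

Lemma normal_tail {R : realType} (s t : R) : 0 < s ->
  normal_prob 0 s `[-(s*t), +oo[ = normal_prob 0 1 `]-oo, t].
Proof.
move=> s0.
pose F := fun x : R => - (x * s^-1).
have FE : F = - ((@id R) * cst s^-1) by apply/funext => x.
have dF : forall x : R, is_derive x (1:R) F (- s^-1).
  move=> x.
  have h := is_deriveN (@is_deriveM R R id (cst s^-1) x 1 1 0 (is_derive_id _ _) (is_derive_cst _ _ _)).
  rewrite FE; apply: (is_derive_eq h).
  by rewrite scaler0 add0r; congr (- _); exact: mulr1.
have F'E : F^`()%classic = cst (- s^-1).
  by apply/funext => x; have hx := dF x; rewrite derive1E; exact: derive_val.
have Fa : F (- (s * t)) = t by rewrite /F; field; exact: lt0r_neq0.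
rewrite /normal_prob -[in RHS]Fa.
rewrite decreasing_ge0_integration_by_substitutiony; last 8 first.
- move=> x y _ _ xy; rewrite /F ltrN2 ltr_pM2r ?invr_gt0 //.
- by rewrite F'E => x _; exact: cst_continuous.
- by rewrite F'E; exact: is_cvg_cst.
- by rewrite F'E; exact: is_cvg_cst.
- split; first by move=> x _; have hx := dF x; exact: ex_derive.
  apply: cvg_at_right_filter.
  rewrite FE; apply: cvgN; apply: cvgM; [exact: cvg_id| exact: cvg_cst].
- rewrite FE; apply/cvgNrNy; apply: gt0_cvgMly; rewrite ?invr_gt0 //; exact: cvg_id.
- apply: continuous_subspaceT; apply: continuous_normal_pdf; exact: oner_neq0.
- by move=> x _; exact: normal_pdf_ge0.
apply: eq_integral => x _; congr EFin.
rewrite F'E /= opprK !normal_pdfE ?oner_neq0 ?gt_eqF //.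
have peakE : normal_peak s = normal_peak 1 * s^-1.
  rewrite /normal_peak expr1n mul1r -invfM; congr (_^-1).
  rewrite -mulrnAr sqrtrM ?sqr_ge0 // sqrtr_sqr ger0_norm ?(ltW s0) //.
  by rewrite mulrC.
have funE : normal_fun 0 s x = normal_fun 0 1 (F x).
  rewrite /normal_fun /F; congr expR; rewrite expr1n; field.
  by rewrite lt0r_neq0.
change (normal_peak s * normal_fun 0 s x =
  normal_peak 1 * normal_fun 0 1 (F x) * s^-1).
by rewrite peakE funE mulrAC.
Qed.

Theorem theorem6p7 (R : realType) (d : measure_display) (T : measurableType d)
    (P : probability T R) (n m : nat) (r : 'I_n -> 'I_m -> R) (psi : R -> R)
    (sigma mu : 'I_m -> R) (Z : 'I_n -> 'I_m -> {RV P >-> R}) (beta tau : R) :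
  (0 < n)%N -> (0 < m)%N ->
  (forall j i, 0 <= r j i) ->
  neighbor_function psi ->
  (forall i, 0 < sigma i) -> (forall i, 0 < mu i) ->
  mutually_independent P (fun k : 'I_n * 'I_m => (Z k.1 k.2 : T -> R)) ->
  (forall j i (A : set R), measurable A ->
     distribution P (Z j i) A = normal_prob 0 (sigma i / mu i) A) ->
  0 < beta < 1 ->
  Phi tau = (1 - beta) `^ ((m * n)%:R)^-1 ->
  let o j i (w : T) := psi (r j i) + Z j i w in
  let u j i (w : T) := psi_inv psi (o j i w + sigma i * tau / mu i) in
  P [set w | forall j i, ((r j i)%:E <= u j i w)%E] = (1 - beta)%:E.
Proof.
move=> n0 m0 r0 hpsi sig0 mu0 hind hdist hbeta hPhi o u.
pose B := fun k : 'I_n * 'I_m => `[- (sigma k.2 / mu k.2 * tau), +oo[%classic.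
have mB : forall k, measurable (B k) by move=> k; exact: measurable_itv.
have -> : [set w | forall j i, ((r j i)%:E <= u j i w)%E] =
  \bigcap_(k in [set: 'I_n * 'I_m])
     ((fun k : 'I_n * 'I_m => (Z k.1 k.2 : T -> R)) k @^-1` B k).
  apply/seteqP; split => w /=.
  - move=> H k _; have := H k.1 k.2; rewrite /u /o psi_inv_key //.
    rewrite /B /= in_itv /= andbT.
    have -> : sigma k.2 * tau / mu k.2 = sigma k.2 / mu k.2 * tau by rewrite mulrAC.
    move=> h; lra.
  - move=> H j i; rewrite /u /o psi_inv_key //.
    have := H (j, i) I; rewrite /B /= in_itv /= andbT.
    have -> : sigma i * tau / mu i = sigma i / mu i * tau by rewrite mulrAC.
    move=> h; lra.
rewrite hind //.
have hk : forall k : 'I_n * 'I_m,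
    fine (P ((fun k : 'I_n * 'I_m => (Z k.1 k.2 : T -> R)) k @^-1` B k)) = Phi tau.
  move=> k; rewrite /Phi.
  have -> : P ((fun k : 'I_n * 'I_m => (Z k.1 k.2 : T -> R)) k @^-1` B k) =
     distribution P (Z k.1 k.2) (B k) by [].
  rewrite hdist // /B normal_tail //.
  by apply: divr_gt0.
under eq_bigr do rewrite hk.
rewrite prodr_const card_prod !card_ord hPhi.
have hb : 0 <= 1 - beta by lra.
rewrite -powR_mulrn ?powR_ge0 // -powRrM mulnC mulVf ?powRr1 //.
by rewrite pnatr_eq0 -lt0n muln_gt0 m0 n0.
Qed.
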